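(* Let $V$ be an $n$-dimensional vector space over an algebraically closed field and $V_{\mathbb{P}^1}=\mathcal{O}_{\mathbb{P}^1}\otimes V$. Let $0\to A\to V_{\mathbb{P}^1}\to B\to 0$ be a short exact sequence of vector bundles on $\mathbb{P}^1$, with $k=\operatorname{rank}A$, $r=\operatorname{rank}B$ and $d=\deg B$. If $d=r$, then the image of $\mathbb{P}(A)\to\mathbb{P}(V)$ lies in some hyperplane if and only if $B$ is not isomorphic to $\mathcal{O}_{\mathbb{P}^1}(1)^{\oplus r}$.
   Context: $\mathbb{P}(V)$ denotes the projective space of one-dimensional subspaces of $V$, $\mathbb{P}(A)$ the bundle of lines in $A$, and $\mathbb{P}(A)\to\mathbb{P}(V)$ is induced by the inclusion $A\subset V_{\mathbb{P}^1}$. *)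

(* Defs.v *)
From HB Require Import structures.
From mathcomp Require Import all_boot all_order all_algebra.
From mathcomp Require Export mpoly.
Set Implicit Arguments. Unset Strict Implicit. Unset Printing Implicit Defensive.
Import GRing.Theory.
Local Open Scope ring_scope.

(* Model of P^1 over F: homogeneous coordinates (x : y) with (x,y) <> (0,0);
   sections of O(m) on P^1 = binary forms of degree m, i.e. elements of
   {mpoly F[2]} that are m-homogeneous (for mdeg); a negative-degree line
   bundle has only the zero section. *)

Definition P1pt (F : ringType) (x y : F) : 'I_2 -> F :=
  fun i => if val i == 0%N then x else y.

Definition evmx (F : comRingType) (m n : nat)
  (M : 'M[{mpoly F[2]}]_(m, n)) (x y : F) : 'M[F]_(m, n) :=
  map_mx (fun p : {mpoly F[2]} => p.@[P1pt x y]) M.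

(* A surjection  O_{P^1} (x) V --> B  with  B = O(b_0) (+) ... (+) O(b_{r-1}),
   V = F^n (column vectors).  Such a map is an r x n matrix N of forms whose
   j-th row is homogeneous of degree b j; it is a surjection of vector bundles
   iff it is surjective on every fibre, i.e. N(x:y) has rank r at every point. *)
Definition bundle_quotient (F : fieldType) (n r : nat) (b : 'I_r -> nat)
  (N : 'M[{mpoly F[2]}]_(r, n)) : Prop :=
  (forall j i, N j i \is (b j).-homog) /\
  (forall x y : F, (x, y) != (0, 0) -> \rank (evmx N x y) = r).

(* The kernel subbundle A: its fibre at (x:y) is ker N(x:y) in V. *)
Definition fibreA (F : fieldType) (n r : nat) (N : 'M[{mpoly F[2]}]_(r, n))
  (x y : F) : pred 'cV[F]_n :=
  fun v => evmx N x y *m v == 0.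

(* The image of P(A) -> P(V) (the union of the lines of all fibres A_p) lies
   in a hyperplane {v | phi v = 0}, phi a nonzero linear form on V. *)
Definition imageA_in_hyperplane (F : fieldType) (n r : nat)
  (N : 'M[{mpoly F[2]}]_(r, n)) : Prop :=
  exists phi : 'rV[F]_n, phi != 0 /\
    forall x y : F, (x, y) != (0, 0) ->
      forall v : 'cV[F]_n, v \in fibreA N x y -> phi *m v = 0.

(* B = (+)_j O(b j) is isomorphic to O(1)^(+r): there are bundle maps
   T : (+)_j O(b j) -> O(1)^r  (entry (i,j) a section of O(1 - b j)) and
   S : O(1)^r -> (+)_j O(b j)  (entry (j,i) a section of O(b j - 1))
   that are mutually inverse. *)
Definition iso_to_O1_sum (F : fieldType) (r : nat) (b : 'I_r -> nat) : Prop :=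
  exists T S : 'M[{mpoly F[2]}]_r,
    (forall i j, if (b j <= 1)%N then T i j \is (1 - b j)%N.-homog
                 else T i j == 0) /\
    (forall j i, if (1 <= b j)%N then S j i \is (b j - 1)%N.-homog
                 else S j i == 0) /\
    S *m T = 1%:M /\ T *m S = 1%:M.

(* Main.v *)
Require Import Defs.
From HB Require Import structures.
From mathcomp Require Import all_boot all_order all_algebra.
From mathcomp Require Import mpoly.
From mathcomp Require Import zify.
Set Implicit Arguments. Unset Strict Implicit. Unset Printing Implicit Defensive.
Import GRing.Theory.
Local Open Scope ring_scope.

Lemma homog0_const (F : comRingType) (p : {mpoly F[2]}) v w :
  p \is 0.-homog -> p.@[v] = p.@[w].
Proof.
move=> /dhomogP hp; rewrite !mevalE; apply: eq_big_seq => m mp.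
have /eqP m0 : m == 0%MM by rewrite -mdeg_eq0 hp.
by rewrite m0 !big1 // => i _; rewrite mnm0E expr0.
Qed.

Lemma homog1_lin (F : comRingType) (p : {mpoly F[2]}) x y :
  p \is 1.-homog -> p.@[P1pt x y] = x * p.@[P1pt 1 0] + y * p.@[P1pt 0 1].
Proof.
move=> /dhomogP hp; rewrite !mevalE !big_distrr -big_split /=.
apply: eq_big_seq => m mp.
have /mdeg1P [i /eqP ->] : mdeg m == 1%N by rewrite hp.
rewrite !big_ord_recl !big_ord0 !mulr1 !mnmE.
case: i => [[|[|//]] ?] /=; rewrite /P1pt /= !expr1 !expr0 /=; 
  rewrite ?mulr1 ?mul1r ?mulr0 ?mul0r ?addr0 ?add0r; exact: mulrC.
Qed.
Lemma closed_notin (F : closedFieldType) (s : seq F) : exists a, a \notin s.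
Proof.
set P := \prod_(a <- s) ('X - a%:P).
have Pm : P \is monic by apply: monic_prod_XsubC.
have P0 : P != 0 by apply: monic_neq0.
have szq : size (P * 'X - 1) = (size s).+2.
  have sP : size P = (size s).+1 by rewrite /P (size_prod_XsubC s id).
  rewrite size_addl size_mulX //; first exact: (congr1 S sP).
  by rewrite size_opp size_poly1 ltnS lt0n size_poly_eq0.
have : size (P * 'X - 1) != 1 by rewrite szq.
move/closed_rootP=> [x rx]; exists x; apply/negP => xs.
move: rx; rewrite /root !hornerE.
have : root P x by rewrite root_prod_XsubC.
by move/eqP=> ->; rewrite mul0r sub0r oppr_eq0 oner_eq0.
Qed.

Lemma closed_uniq_seq (F : closedFieldType) (k : nat) :
  exists s : seq F, uniq s /\ size s = k.
Proof.
elim: k => [|k [s [us ss]]]; first by exists [::].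
have [a ans] := closed_notin s; exists (a :: s); by rewrite /= ans us ss.
Qed.

Lemma closed_poly_eq0 (F : closedFieldType) (p : {poly F}) :
  (forall t, p.[t] = 0) -> p = 0.
Proof.
move=> hp; apply/eqP; apply/negPn/negP => p0.
have [s [us ss]] := closed_uniq_seq F (size p).
have := max_poly_roots p0 _ us.
rewrite ss ltnn => H; suff : false by []; apply: H.
by apply/allP => t _; apply/eqP/hp.
Qed.
Lemma rowspace_of_ker (F : fieldType) r n (A : 'M[F]_(r, n)) (phi : 'rV[F]_n) :
  (forall v : 'cV_n, A *m v = 0 -> phi *m v = 0) -> exists u : 'rV_r, phi = u *m A.
Proof.
move=> h.
have : (phi <= A)%MS.
  rewrite submxE; apply/eqP; apply/matrixP => i j.
  have := h (col j (cokermx A)).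
  rewrite colEsub !mulmx_colsub mulmx_coker -!colEsub.
  have -> : col j (0 : 'M[F]_(r, n)) = 0 by apply/matrixP => ? ?; rewrite !mxE.
  move=> /(_ erefl) /matrixP /(_ i 0); rewrite !mxE => H.
  exact H.
by move/submxP => [u ->]; exists u.
Qed.

Lemma rank_minor (F : closedFieldType) r n (A : 'M[F]_(r, n)) :
  \rank A = r -> exists f : {ffun 'I_r -> 'I_n}, \det (colsub f A) != 0.
Proof.
move=> rA.
have fA : row_full A^T by rewrite /row_full mxrank_tr rA.
exists (fullrankfun fA).
have := fullrowsub_unit fA; rewrite unitmxE unitfE.
by rewrite -det_tr trmx_mxsub trmxK.
Qed.

Lemma rank_free (F : closedFieldType) r n (A : 'M[F]_(r, n)) (x : 'rV_r) :
  \rank A = r -> x *m A = 0 -> x = 0.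
Proof.
move=> rA xA; have : row_free A by rewrite /row_free rA.
move/row_freeP => [B AB].
by rewrite -[x]mulmx1 -AB mulmxA xA mul0mx.
Qed.

Lemma bezout_seq (F : fieldType) (I : eqType) (P : I -> {poly F}) (s : seq I) :
  uniq s -> exists c : I -> {poly F},
    \sum_(i <- s) c i * P i %= \big[@gcdp F/0]_(i <- s) P i.
Proof.
elim: s => [_|i s IH]; first by exists (fun=> 0); rewrite !big_nil eqpxx.
move=> /andP [ni us]; have [c hc] := IH us.
have [[u1 u2] hu] := Bezoutp (P i) (\sum_(j <- s) c j * P j).
exists (fun j => if j == i then u1 else u2 * c j).
rewrite !big_cons eqxx.
have -> : \sum_(j <- s) (if j == i then u1 else u2 * c j) * P j
          = u2 * \sum_(j <- s) c j * P j.
  rewrite mulr_sumr; apply: eq_big_seq => j js.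
  have -> : (j == i) = false by apply/negbTE; apply: contraNneq ni => <-.
  by rewrite mulrA.
apply: eqp_trans hu _.
by rewrite eqp_sym; apply: eqp_gcdr; rewrite eqp_sym.
Qed.

Lemma mx_poly_eq (F : closedFieldType) m n (A B : 'M[{poly F}]_(m, n)) :
  (forall t, map_mx (horner_eval t) A = map_mx (horner_eval t) B) -> A = B.
Proof.
move=> h; apply/matrixP => i j; apply/eqP; rewrite -subr_eq0; apply/eqP.
apply: closed_poly_eq0 => t; rewrite hornerD hornerN; apply/eqP; rewrite subr_eq0.
by have /matrixP /(_ i j) := h t; rewrite !mxE => e; apply/eqP.
Qed.

Section Hard.
Variables (F : closedFieldType) (r n : nat) (N0 N1 : 'M[F]_(r, n)) (phi : 'rV[F]_n).
Hypothesis hrank : forall t : F, \rank (N0 + t *: N1)%R = r.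
Hypothesis hinf : \rank N1 = r.
Hypothesis hphi : forall t : F, exists u : 'rV_r, phi = u *m (N0 + t *: N1).

Let M : 'M[{poly F}]_(r, n) := map_mx polyC N0 + 'X *: map_mx polyC N1.
Let Phi : 'rV[{poly F}]_n := map_mx polyC phi.

Lemma evalM t : map_mx (horner_eval t) M = N0 + t *: N1.
Proof. by apply/matrixP => i j; rewrite !mxE /horner_eval !hornerE. Qed.

Lemma evalC m k (A : 'M[F]_(m, k)) t : map_mx (horner_eval t) (map_mx polyC A) = A.
Proof. by apply/matrixP => i j; rewrite !mxE /horner_eval hornerC. Qed.

Definition Dd (f : {ffun 'I_r -> 'I_n}) := \det (mxsub id f M).
Definition vv (f : {ffun 'I_r -> 'I_n}) :=
  mxsub id f Phi *m \adj (mxsub id f M).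

Lemma vvM f : vv f *m M = Dd f *: Phi.
Proof.
apply: mx_poly_eq => t.
rewrite /vv /Dd !map_mxM map_mxZ map_mx_adj !map_mxsub evalM evalC.
rewrite -det_map_mx map_mxsub evalM /=.
have [u ->] := hphi t.
rewrite -mulmx_colsub -!mulmxA (mulmxA (mxsub _ _ _)) mul_mx_adj.
by rewrite mul_scalar_mx -scalemxAr.
Qed.


Lemma Dd_eval f t : (Dd f).[t] = \det (mxsub id f (N0 + t *: N1)).
Proof. by rewrite /Dd -horner_evalE -det_map_mx map_mxsub evalM. Qed.

Lemma bezout_Dd : exists (c : {ffun 'I_r -> 'I_n} -> {poly F}) (lam : F),
  lam != 0 /\ \sum_(f <- enum {ffun 'I_r -> 'I_n}) c f * Dd f = lam%:P.
Proof.
have [c hc] := bezout_seq Dd (enum_uniq {ffun 'I_r -> 'I_n}).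
exists c.
set g := \big[@gcdp F/0]_(_ <- _) _ in hc.
have sg : size g == 1.
  apply/negPn/negP => /closed_rootP [x rx].
  have [f0 hf0] := rank_minor (hrank x).
  move: rx; rewrite /g -(big_map Dd xpredT (fun p => p)) root_biggcd all_map.
  move=> /allP /(_ f0 (mem_enum _ f0)) /=.
  by rewrite /root Dd_eval (negbTE hf0).
move: sg; rewrite -(eqp_size hc) => /size_poly1P [lam l0 ->].
by exists lam.
Qed.


Definition cfv m k (A : 'rV[{poly F}]_m) : 'rV[F]_m := \row_j (A 0 j)`_k.

Lemma coefMS k (x : 'rV[{poly F}]_r) :
  cfv k.+1 (x *m M) = cfv k.+1 x *m N0 + cfv k x *m N1.
Proof.
apply/rowP => j; rewrite !mxE coef_sum -big_split; apply: eq_bigr => i _.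
by rewrite !mxE mulrDr coefD coefMC mulrA coefMC coefMX /=.
Qed.

Lemma coefM0 (x : 'rV[{poly F}]_r) : cfv 0 (x *m M) = cfv 0 x *m N0.
Proof.
apply/rowP => j; rewrite !mxE coef_sum; apply: eq_bigr => i _.
rewrite !mxE mulrDr coefD coefMC mulrA coefMC coefMX /=.
by rewrite mul0r addr0.
Qed.

Lemma hard_phi0 : phi = 0.
Proof.
have [c [lam [l0 hc]]] := bezout_Dd.
set w := \sum_(f <- enum {ffun 'I_r -> 'I_n}) c f *: vv f.
have wM : w *m M = lam%:P *: Phi.
  rewrite /w mulmx_suml -hc scaler_suml; apply: eq_bigr => f _.
  by rewrite -scalemxAl vvM scalerA.
set K := \max_(i < r) size (w (0 : 'I_1)%R i).
have wK : forall k, (K <= k)%N -> cfv k w = 0.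
  move=> k Kk; apply/rowP => i; rewrite !mxE nth_default //.
  apply: leq_trans Kk; exact: (leq_bigmax i).
have step : forall k, cfv k.+1 w = 0 -> cfv k w = 0.
  move=> k h; apply: (rank_free hinf).
  have := coefMS k w; rewrite h mul0mx add0r wM => <-.
  by apply/rowP => j; rewrite !mxE -polyCM coefC.
have down : forall m, cfv (K - m) w = 0.
  elim=> [|m IH]; first by apply: wK; rewrite subn0.
  move: IH; case E : (K - m)%N => [|k] IH.
    by have -> : (K - m.+1 = 0)%N by lia.
  have -> : (K - m.+1 = k)%N by lia.
  exact: step IH.
have := coefM0 w; have := down K; rewrite subnn => ->; rewrite mul0mx wM => h0.
have : lam *: phi = 0.
  by apply/rowP => j; move/rowP: h0 => /(_ j); rewrite !mxE -polyCM coefC /= => <-.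
by move/eqP; rewrite scalemx_eq0 (negbTE l0) /= => /eqP.
Qed.

End Hard.

Section Main.
Variables (F : closedFieldType) (n r : nat) (b : 'I_r -> nat)
  (N : 'M[{mpoly F[2]}]_(r, n)).

Lemma iso_all1 : (forall j, b j = 1%N) -> @iso_to_O1_sum F r b.
Proof.
move=> hb; exists 1%:M, 1%:M; split; last split; last split.
- move=> i j; rewrite hb /= mxE; case: eqP => _; [exact: dhomog1 | exact: dhomog0].
- move=> j i; rewrite hb /= mxE; case: eqP => _; [exact: dhomog1 | exact: dhomog0].
- by rewrite mulmx1.
- by rewrite mulmx1.
Qed.

Lemma not_iso (j : 'I_r) : b j = 0%N -> ~ @iso_to_O1_sum F r b.
Proof.
move=> bj [T [S [hT [hS [ST _]]]]].
have := congr1 (fun A : 'M_r => A j j) ST; rewrite !mxE eqxx /= big1.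
  by move/eqP; rewrite eq_sym mulr1n oner_eq0.
by move=> i _; have := hS j i; rewrite bj /= => /eqP ->; rewrite mul0r.
Qed.

Lemma pt_neq0 (x y : F) : x != 0 -> (x, y) != (0, 0).
Proof. by move=> x0; apply: contra x0 => /eqP [-> _]. Qed.

Lemma pt_neq0' (x y : F) : y != 0 -> (x, y) != (0, 0).
Proof. by move=> y0; apply: contra y0 => /eqP [_ ->]. Qed.

Lemma hyper_zero (j : 'I_r) : bundle_quotient b N -> b j = 0%N ->
  imageA_in_hyperplane N.
Proof.
move=> [hhom hrk] bj.
exists (row j (evmx N 1 0)); split.
  apply/negP => /eqP h0.
  have r10 := hrk 1 0 (pt_neq0 0 (oner_neq0 F)).
  have := rank_free r10 (x := delta_mx 0 j).
  rewrite -rowE h0 => /(_ erefl) /matrixP /(_ 0 j).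
  by rewrite !mxE !eqxx /= => /eqP; rewrite oner_eq0.
move=> x y xy v; rewrite /fibreA unfold_in => /eqP hv.
have -> : row j (evmx N 1 0) = row j (evmx N x y).
  apply/rowP => k; rewrite !mxE; apply: homog0_const.
  by have := hhom j k; rewrite bj.
by rewrite -row_mul hv; apply/rowP => k; rewrite !mxE.
Qed.

Lemma no_hyper_all1 : bundle_quotient b N -> (forall j, b j = 1%N) ->
  ~ imageA_in_hyperplane N.
Proof.
move=> [hhom hrk] hb [phi [phi0 hphi]].
have hE : forall t, evmx N 1 t = (evmx N 1 0 + t *: evmx N 0 1)%R.
  move=> t; apply/matrixP => i k; rewrite !mxE homog1_lin; last first.
    by have := hhom i k; rewrite hb.
  by rewrite mul1r.
have := @hard_phi0 F r n (evmx N 1 0) (evmx N 0 1) phi.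
move=> H; move/eqP: phi0; apply; apply: H.
- by move=> t; rewrite -hE; apply: hrk; apply: pt_neq0; exact: oner_neq0.
- by apply: hrk; apply: pt_neq0'; exact: oner_neq0.
- move=> t; rewrite -hE; apply: rowspace_of_ker => v hv.
  apply: (hphi 1 t); first by apply: pt_neq0; exact: oner_neq0.
  by rewrite /fibreA unfold_in hv.
Qed.

End Main.

Theorem proposition4p1 (F : closedFieldType) (n r : nat) (b : 'I_r -> nat)
  (N : 'M[{mpoly F[2]}]_(r, n)) :
  bundle_quotient b N ->
  let d := (\sum_(j < r) b j)%N in
  d = r ->
  (imageA_in_hyperplane N <-> ~ @iso_to_O1_sum F r b).
Proof.
move=> hq d dr.
case: (pickP (fun j => b j == 0%N)) => [j /eqP bj | h].
  split=> _; [exact: not_iso bj | exact: hyper_zero hq bj].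
have hb : forall j, b j = 1%N.
  have e : (\sum_(j < r) (b j - 1) = 0)%N.
    have : (\sum_(j < r) b j = \sum_(j < r) 1 + \sum_(j < r) (b j - 1))%N.
      rewrite -big_split; apply: eq_bigr => j _.
      have := h j; rewrite /= => /negbT; rewrite -lt0n => hj; lia.
    rewrite -/d dr sum1_card card_ord => e; lia.
  move=> j; move/eqP: e; rewrite sum_nat_eq0 => /forallP /(_ j) /= /eqP.
  have := h j; rewrite /= => /negbT; rewrite -lt0n => hj; lia.
split=> H; exfalso.
  exact: no_hyper_all1 hq hb H.
by apply: H; apply: iso_all1.
Qed.
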